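(* Assume $|\rho|<1$. Let $$L=I(\hat H_A;\hat H_B)-\min\big[I(\hat H_A;\hat H_E),\,I(\hat H_B;\hat H_E)\big],\qquad U=\min\big[I(\hat H_A;\hat H_B),\,I(\hat H_A;\hat H_B\mid \hat H_E)\big].$$ In the high-SNR regime (i.e. $\sigma_A^2\to0$, $\sigma_B^2\to 0$, $\sigma_E^2\to 0$ with $\sigma_B^2=a\,\sigma_A^2$ and $\sigma_E^2=b\,\sigma_A^2$ for fixed constants $a,b\in(0,\infty)$), both bounds satisfy $$L=\log_2\!\Big(\frac{p(1-|\rho|^2)}{\sigma_A^2+\sigma_B^2}\Big)+O(\sigma_A^2),\qquad U=\log_2\!\Big(\frac{p(1-|\rho|^2)}{\sigma_A^2+\sigma_B^2}\Big)+O(\sigma_A^2).$$ Consequently the secret-key capacity based on complex channel sampling, which satisfies $L\le C_s^{\mathrm{Cplex}}\le U$, equals $\log_2\!\big(\frac{p(1-|\rho|^2)}{\sigma_A^2+\sigma_B^2}\big)+O(\sigma_A^2)$.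
   Context: Fix $p>0$, $\rho\in\mathbb C$ with $|\rho|\le 1$, and noise variances $\sigma_A^2,\sigma_B^2,\sigma_E^2>0$. Let $(H,H_E)$ be a zero-mean circularly-symmetric complex Gaussian (ZMCSCG) random vector with covariance matrix $p\begin{pmatrix}1&\rho\\ \bar\rho&1\end{pmatrix}$. Let $W_A,W_B,W_E$ be ZMCSCG random variables with variances $\sigma_A^2,\sigma_B^2,\sigma_E^2$, mutually independent and independent of $(H,H_E)$. Define $\hat H_A=H+W_A$, $\hat H_B=H+W_B$, $\hat H_E=H_E+W_E$. All mutual informations are in bits (logarithm base 2). The secret-key capacity $C_s^{\mathrm{Cplex}}$ is the maximal rate (secret bits per i.i.d. observation of $(\hat H_A,\hat H_B,\hat H_E)$) at which Alice (observing $\hat H_A$) and Bob (observing $\hat H_B$) can agree on a secret key, with an authenticated public channel, while Eve observes $\hat H_E$; it is known to satisfy $L\le C_s^{\mathrm{Cplex}}\le U$ with $L,U$ as in the claim. Notation $f=O(g)$ means $|f|\le\lambda g$ for some constant $\lambda$ in a neighbourhood of the limit. *)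

(* Defs.v *)
From mathcomp Require Import all_boot all_order all_algebra.
From mathcomp.real_closed Require Import complex.
From mathcomp Require Import reals sequences exp trigo.
Import GRing.Theory Num.Theory.

Set Implicit Arguments.
Unset Strict Implicit.
Unset Printing Implicit Defensive.

Local Open Scope ring_scope.
Local Open Scope complex_scope.

Section Defs.
Variable R : realType.

Definition cmod (z : R[i]) : R :=
  Num.sqrt (complex.Re z ^+ 2 + complex.Im z ^+ 2).

Definition log2 (x : R) : R := ln x / ln 2.

(* Covariance matrix of the ZMCSCG vector (H, H_E):  p [[1, rho], [rho^*, 1]] *)
Definition cov_channel (p : R) (rho : R[i]) : 'M[R[i]]_2 :=
  \matrix_(i < 2, j < 2)
    (p%:C * (if i == j then 1 else if i == ord0 then rho else rho^*)).

(* Mixing matrix: (Hhat_A, Hhat_B, Hhat_E) = mix *m (H, H_E) + (W_A, W_B, W_E) *)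
Definition mix : 'M[R[i]]_(3, 2) :=
  \matrix_(i < 3, j < 2) (if (i == 2 :> nat) == (j == 1 :> nat) then 1 else 0).

(* Covariance matrix E[X X^*] of the observation vector
   X = (Hhat_A, Hhat_B, Hhat_E), with independent noises of variances
   sA, sB, sE (i.e. sigma_A^2, sigma_B^2, sigma_E^2).  mix is real, so its
   conjugate transpose is its transpose. *)
Definition cov_obs (p : R) (rho : R[i]) (sA sB sE : R) : 'M[R[i]]_3 :=
  mix *m cov_channel p rho *m mix^T
  + diag_mx (\row_(i < 3) (if i == 0 :> nat then sA%:C
                           else if i == 1 :> nat then sB%:C else sE%:C)).

(* Differential entropy (in bits) of a ZMCSCG vector with covariance K:
   h = log2 det (pi e K)  (the determinant of a Hermitian p.d. matrix is real). *)
Definition gauss_entropy n (K : 'M[R[i]]_n) : R :=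
  log2 (complex.Re (\det ((pi * expR 1)%:C *: K))).

Definition sel (s : seq 'I_3) : 'I_(size s) -> 'I_3 := fun i => nth ord0 s i.

Definition hX (K : 'M[R[i]]_3) (s : seq 'I_3) : R :=
  gauss_entropy (mxsub (@sel s) (@sel s) K).

Definition MI (K : 'M[R[i]]_3) (s t : seq 'I_3) : R :=
  hX K s + hX K t - hX K (s ++ t).

Definition CMI (K : 'M[R[i]]_3) (s t u : seq 'I_3) : R :=
  hX K (s ++ u) + hX K (t ++ u) - hX K u - hX K (s ++ t ++ u).

Definition iA : 'I_3 := ord0.
Definition iB : 'I_3 := inord 1.
Definition iE : 'I_3 := inord 2.

Definition Lbound (p : R) (rho : R[i]) (sA sB sE : R) : R :=
  let K := cov_obs p rho sA sB sE in
  MI K [:: iA] [:: iB] - Num.min (MI K [:: iA] [:: iE]) (MI K [:: iB] [:: iE]).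

Definition Ubound (p : R) (rho : R[i]) (sA sB sE : R) : R :=
  let K := cov_obs p rho sA sB sE in
  Num.min (MI K [:: iA] [:: iB]) (CMI K [:: iA] [:: iB] [:: iE]).

Definition bigO_at0 (f g : R -> R) : Prop :=
  exists lam delta : R, 0 < delta /\
    forall s : R, 0 < s < delta -> `|f s - g s| <= lam * s.

End Defs.

(* Main.v *)
Require Import Defs.
From mathcomp Require Import all_boot all_order all_algebra.
From mathcomp.real_closed Require Import complex.
From mathcomp Require Import reals sequences exp trigo.
From mathcomp Require Import ring lra.
Import Order.TTheory GRing.Theory Num.Theory.
Local Open Scope ring_scope.
Local Open Scope complex_scope.
Lemma det2E (F : comRingType) (f : nat -> nat -> F) :
  \det (\matrix_(i < 2, j < 2) f i j) = f 0%N 0%N * f 1%N 1%N - f 0%N 1%N * f 1%N 0%N.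
Proof.
rewrite (expand_det_row _ ord0) !big_ord_recl big_ord0 /cofactor !det_mx11 !mxE /=.
rewrite !expr0 !expr1; ring.
Qed.
Lemma det3E (F : comRingType) (f : nat -> nat -> F) :
  \det (\matrix_(i < 3, j < 3) f i j) =
  f 0%N 0%N * (f 1%N 1%N * f 2%N 2%N - f 1%N 2%N * f 2%N 1%N)
  - f 0%N 1%N * (f 1%N 0%N * f 2%N 2%N - f 1%N 2%N * f 2%N 0%N)
  + f 0%N 2%N * (f 1%N 0%N * f 2%N 1%N - f 1%N 1%N * f 2%N 0%N).
Proof.
rewrite (expand_det_row _ ord0) !big_ord_recl big_ord0 /cofactor.
rewrite !(expand_det_row _ ord0) !big_ord_recl !big_ord0 /cofactor !det_mx11 !mxE /= /bump /=.
ring.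
Qed.

Section S.
Variable R : realType.
Variables (p sA sB sE : R) (rho : R[i]).

Definition Kf (i j : nat) : R[i] :=
  match i, j with
  | 0, 0 => (p + sA)%:C | 1, 1 => (p + sB)%:C | 2, 2 => (p + sE)%:C
  | 0, 1 | 1, 0 => p%:C
  | 0, 2 | 1, 2 => p%:C * rho
  | _, _ => p%:C * rho^* end.

Lemma covE (i j : 'I_3) : cov_obs p rho sA sB sE i j = Kf i j.
Proof.
rewrite /cov_obs !mxE !big_ord_recl !big_ord0 !mxE.
case: i => [[|[|[|?]]] Hi]; case: j => [[|[|[|?]]] Hj] //=;
  rewrite ?big_ord_recl ?big_ord0 !mxE /=; ring.
Qed.

Local Notation t := (cmod rho ^+ 2).

Lemma rhoE : rho * rho^* = t%:C.
Proof.
case: rho => x y; rewrite /cmod /= sqr_sqrtr; last by rewrite addr_ge0 // sqr_ge0.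
simpc. congr (_ +i* _); ring.
Qed.

Definition cst := pi * expR 1 : R.

Lemma ReZ n (M : 'M[R[i]]_n) x : complex.Re (\det (x%:C *: M)) = x ^+ n * complex.Re (\det M).
Proof. rewrite detZ -rmorphXn; case: (\det M) => u v /=; ring. Qed.

Lemma vB : val iB = 1%N. Proof. by rewrite /iB /= inordK. Qed.
Lemma vE : val iE = 2%N. Proof. by rewrite /iE /= inordK. Qed.

Definition Kg (l : seq nat) (a b : nat) := Kf (nth 0%N l a) (nth 0%N l b).
Lemma subE (s : seq 'I_3) :
  mxsub (@sel s) (@sel s) (cov_obs p rho sA sB sE) =
  \matrix_(i, j) Kg (map val s) i j.
Proof.
apply/matrixP => i j; rewrite [in LHS]mxE [in RHS]mxE covE /sel /Kg.
by rewrite !(nth_map ord0) // ltn_ord.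
Qed.

Definition hXe (s : seq 'I_3) := hX (cov_obs p rho sA sB sE) s.

Ltac hcomp := rewrite /hX /gauss_entropy ReZ subE /= ?vB ?vE;
  rewrite ?det_mx11 ?det2E ?det3E ?mxE /Kg; cbv beta iota zeta delta [nth Kf].

Lemma hA : hX (cov_obs p rho sA sB sE) [:: iA] = log2 (cst * (p + sA)).
Proof. by hcomp; rewrite expr1. Qed.
Lemma hB : hX (cov_obs p rho sA sB sE) [:: iB] = log2 (cst * (p + sB)).
Proof. by hcomp; rewrite expr1. Qed.
Lemma hE : hX (cov_obs p rho sA sB sE) [:: iE] = log2 (cst * (p + sE)).
Proof. by hcomp; rewrite expr1. Qed.
Ltac fin D Dc := hcomp; congr (log2 (_ * _));
  match goal with |- complex.Re ?e = _ => have -> : e = D%:C;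
  [rewrite (_ : D%:C = Dc); [rewrite -?rhoE; ring | ring] | by []] end.
Local Notation "x %:c" := (real_complex R x) (at level 2, format "x %:c").
Lemma hAB : hX (cov_obs p rho sA sB sE) [:: iA; iB] = log2 (cst ^+ 2 * ((p + sA) * (p + sB) - p * p)).
Proof. fin ((p + sA) * (p + sB) - p * p) ((p + sA)%:c * (p + sB)%:c - p%:c * p%:c). Qed.
Lemma hAE : hX (cov_obs p rho sA sB sE) [:: iA; iE] = log2 (cst ^+ 2 * ((p + sA) * (p + sE) - p * p * t)).
Proof. fin ((p + sA) * (p + sE) - p * p * t) ((p + sA)%:c * (p + sE)%:c - p%:c * p%:c * t%:c). Qed.
Lemma hBE : hX (cov_obs p rho sA sB sE) [:: iB; iE] = log2 (cst ^+ 2 * ((p + sB) * (p + sE) - p * p * t)).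
Proof. fin ((p + sB) * (p + sE) - p * p * t) ((p + sB)%:c * (p + sE)%:c - p%:c * p%:c * t%:c). Qed.
Lemma hABE : hX (cov_obs p rho sA sB sE) [:: iA; iB; iE] =
  log2 (cst ^+ 3 * ((p + sE) * ((p + sA) * (p + sB) - p * p) - p * p * t * (sA + sB))).
Proof. fin ((p + sE) * ((p + sA) * (p + sB) - p * p) - p * p * t * (sA + sB))
  ((p + sE)%:c * ((p + sA)%:c * (p + sB)%:c - p%:c * p%:c) - p%:c * p%:c * t%:c * (sA%:c + sB%:c)). Qed.
End S.

Section T.
Variable R : realType.
Lemma lnMp (x y : R) : 0 < x -> 0 < y -> ln (x * y) = ln x + ln y.
Proof. by move=> hx hy; rewrite lnM ?posrE. Qed.
Lemma lnVp (x : R) : 0 < x -> ln (x^-1) = - ln x.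
Proof. by move=> hx; rewrite lnV ?posrE. Qed.

Ltac pos := first [done | lra | (apply: mulr_gt0; pos) | (apply: exprn_gt0; pos)
  | (rewrite invr_gt0; pos) | (apply: addr_gt0; pos) | nra].

Lemma id1 (p a r2 c s : R) : 0 < p -> 0 < a -> 0 <= r2 -> r2 < 1 -> 0 < c -> 0 < s ->
  (log2 (c * (p + s)) + log2 (c * (p + a * s)) - log2 (c ^+ 2 * ((p + s) * (p + a * s) - p * p))
   - log2 (p * (1 - r2) / (s + a * s))) * ln 2
  = - ln (1 - r2) + (ln (p + s) - ln p) + (ln (p + a * s) - ln p)
    - (ln (p * (1 + a) + a * s) - ln (p * (1 + a))).
Proof.
move=> hp ha hr0 hr1 hc hs.
have l2 : 0 < ln (2 : R) by apply: ln_gt0; lra.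
rewrite (_ : (p + s) * (p + a * s) - p * p = s * (p * (1 + a) + a * s)); last by ring.
rewrite (_ : s + a * s = s * (1 + a)); last by ring.
rewrite /log2 !lnMp ?lnVp ?lnXn; try pos. rewrite !lnMp; try pos.
field. all: try pos.
Qed.

Lemma id2 (p r2 c x y : R) : 0 < p -> 0 <= r2 -> r2 < 1 -> 0 < c -> 0 < x -> 0 < y ->
  (log2 (c * (p + x)) + log2 (c * (p + y)) - log2 (c ^+ 2 * ((p + x) * (p + y) - p * p * r2))) * ln 2
  = - ln (1 - r2) + (ln (p + x) - ln p) + (ln (p + y) - ln p)
    - (ln (p * p * (1 - r2) + (p * (x + y) + x * y)) - ln (p * p * (1 - r2))).
Proof.
move=> hp hr0 hr1 hc hx hy.
have l2 : 0 < ln (2 : R) by apply: ln_gt0; lra.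
rewrite (_ : (p + x) * (p + y) - p * p * r2 = p * p * (1 - r2) + (p * (x + y) + x * y)); last by ring.
have h1 : 0 < p * p * (1 - r2) by pos.
rewrite /log2 !lnMp ?lnXn; try pos.
rewrite ?lnMp; try pos.
field. all: try pos.
Qed.

Lemma id4 (p a b r2 c s : R) : 0 < p -> 0 < a -> 0 < b -> 0 <= r2 -> r2 < 1 -> 0 < c -> 0 < s ->
  (log2 (c ^+ 2 * ((p + s) * (p + b * s) - p * p * r2))
   + log2 (c ^+ 2 * ((p + a * s) * (p + b * s) - p * p * r2))
   - log2 (c * (p + b * s))
   - log2 (c ^+ 3 * ((p + b * s) * ((p + s) * (p + a * s) - p * p) - p * p * r2 * (s + a * s)))
   - log2 (p * (1 - r2) / (s + a * s))) * ln 2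
  = (ln (p * p * (1 - r2) + (p * (s + b * s) + s * (b * s))) - ln (p * p * (1 - r2)))
    + (ln (p * p * (1 - r2) + (p * (a * s + b * s) + a * s * (b * s))) - ln (p * p * (1 - r2)))
    - (ln (p + b * s) - ln p)
    - (ln (p * p * (1 + a) * (1 - r2) + s * (p * a + b * p * (1 + a) + a * b * s))
       - ln (p * p * (1 + a) * (1 - r2))).
Proof.
move=> hp ha hb hr0 hr1 hc hs.
have l2 : 0 < ln (2 : R) by apply: ln_gt0; lra.
rewrite (_ : (p + s) * (p + b * s) - p * p * r2 = p * p * (1 - r2) + (p * (s + b * s) + s * (b * s))); last by ring.
rewrite (_ : (p + a * s) * (p + b * s) - p * p * r2 = p * p * (1 - r2) + (p * (a * s + b * s) + a * s * (b * s))); last by ring.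
rewrite (_ : (p + b * s) * ((p + s) * (p + a * s) - p * p) - p * p * r2 * (s + a * s)
   = s * (p * p * (1 + a) * (1 - r2) + s * (p * a + b * p * (1 + a) + a * b * s))); last by ring.
rewrite (_ : s + a * s = s * (1 + a)); last by ring.
have h1 : 0 < p * p * (1 - r2) by pos.
have h2 : 0 < p * p * (1 + a) * (1 - r2) by pos.
have h3 : 0 < s * (p * a + b * p * (1 + a) + a * b * s) by pos.
rewrite /log2 !lnMp ?lnVp ?lnXn; try pos.
rewrite ?lnMp; try pos.
rewrite ?lnMp; try pos.
field. all: try pos.
Qed.
Lemma lnlin (X0 h : R) : 0 < X0 -> 0 <= h -> 0 <= ln (X0 + h) - ln X0 <= h / X0.
Proof.
move=> hX hh.
have hp : 0 < X0 + h by lra.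
apply/andP; split.
  by rewrite subr_ge0 ler_ln ?posrE //; lra.
have -> : ln (X0 + h) - ln X0 = ln (1 + h / X0).
  rewrite -ln_div ?posrE //; congr ln; field; lra.
apply: le_ln1Dx; have : 0 <= h / X0 by rewrite divr_ge0 // ltW. lra.
Qed.
Lemma min_cases (x y : R) : Num.min x y <= x /\ Num.min x y <= y /\ (Num.min x y = x \/ Num.min x y = y).
Proof.
rewrite /Num.min; case: ifP => h.
  split; [lra|split; [|by left]]. move: h; lra.
split; [|split; [lra|by right]]. move/negbT: h; rewrite -leNgt. lra.
Qed.
End T.

Section M.
Variable R : realType.

Lemma bnd (X0 h al s K : R) : 0 < X0 -> 0 <= h -> h <= al * s -> al / X0 <= K -> 0 <= s ->
  0 <= (ln (X0 + h) - ln X0) / ln 2 <= (K / ln 2) * s.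
Proof.
move=> hX hh hs hK s0.
have l2 : 0 < ln (2 : R) by apply: ln_gt0; lra.
have /andP[h1 h2] := @lnlin R X0 h hX hh.
apply/andP; split; first by rewrite divr_ge0 // ltW.
rewrite mulrAC ler_pM2r ?invr_gt0 //.
apply: (le_trans h2).
apply: (@le_trans _ _ (al * s * X0^-1)); first by rewrite ler_wpM2r // invr_ge0 ltW.
rewrite mulrAC. by apply: ler_wpM2r.
Qed.

Lemma scal (x k s : R) : 0 < ln (2:R) -> - (k * s) <= x * ln 2 <= k * s ->
  `|x| <= (k / ln 2) * s.
Proof.
move=> l2 /andP[h1 h2].
rewrite ler_norml; apply/andP; split.
  by rewrite mulrAC -mulNr ler_pdivrMr.
by rewrite mulrAC ler_pdivlMr.
Qed.
End M.

Lemma linA (R : realType) (X u w x y : R) : 0 < ln (2:R) ->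
  X * ln 2 = - u + w + x - y -> X = - (u / ln 2) + w / ln 2 + x / ln 2 - y / ln 2.
Proof. move=> l2 E; apply: (mulIf (lt0r_neq0 l2)); rewrite E; field; exact: lt0r_neq0. Qed.
Lemma linB (R : realType) (X w x y z : R) : 0 < ln (2:R) ->
  X * ln 2 = w + x - y - z -> X = w / ln 2 + x / ln 2 - y / ln 2 - z / ln 2.
Proof. move=> l2 E; apply: (mulIf (lt0r_neq0 l2)); rewrite E; field; exact: lt0r_neq0. Qed.

Lemma keyalg (R : realType) (mAB mAE mBE cmi T v dA dB dE dAB dAE dBE dABE e : R) :
  mAB - T = - v + dA + dB - dAB -> mAE = - v + dA + dE - dAE ->
  mBE = - v + dB + dE - dBE -> cmi - T = dAE + dBE - dE - dABE -> v <= 0 ->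
  0 <= dA <= e -> 0 <= dB <= e -> 0 <= dE <= e -> 0 <= dAB <= e ->
  0 <= dAE <= e -> 0 <= dBE <= e -> 0 <= dABE <= e ->
  (- (3 * e) <= mAB - Num.min mAE mBE - T <= 3 * e) /\ (- (3 * e) <= Num.min mAB cmi - T <= 3 * e).
Proof.
move=> F1 F2 F3 F4 v0 /andP[a1 a2] /andP[b1 b2] /andP[c1 c2] /andP[d1 d2]
  /andP[e1 e2] /andP[f1 f2] /andP[g1 g2].
have [h1 [h2 h3]] := @min_cases R mAE mBE.
have [h4 [h5 h6]] := @min_cases R mAB cmi.
split; apply/andP; split; case: h3 => h3; case: h6 => h6; lra.
Qed.

Theorem proposition1 (R : realType) (p : R) (rho : R[i]) (a b : R) :
  0 < p -> cmod rho < 1 -> 0 < a -> 0 < b ->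
  let target := fun s : R => log2 (p * (1 - cmod rho ^+ 2) / (s + a * s)) in
  bigO_at0 (fun s => Lbound p rho s (a * s) (b * s)) target /\
  bigO_at0 (fun s => Ubound p rho s (a * s) (b * s)) target /\
  (forall C : R -> R,
     (forall s : R, 0 < s ->
        Lbound p rho s (a * s) (b * s) <= C s <= Ubound p rho s (a * s) (b * s)) ->
     bigO_at0 C target).
Proof.
move=> hp hr ha hb target.
have c0 : 0 <= cmod rho by rewrite /cmod sqrtr_ge0.
pose r2 := cmod rho ^+ 2.
have r0 : 0 <= r2 by rewrite /r2 exprn_ge0.
have r1 : r2 < 1 by rewrite /r2 expr2; nra.
have l2 : 0 < ln (2:R) by apply: ln_gt0; lra.
have cp : 0 < cst R by rewrite /cst mulr_gt0 ?pi_gt0 ?expR_gt0.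
have q0 : 0 < p * p * (1 - r2) by apply: mulr_gt0; [apply: mulr_gt0|]; lra.
have q1 : 0 < p * p * (1 + a) * (1 - r2) by apply: mulr_gt0; [apply: mulr_gt0; [apply: mulr_gt0|]|]; lra.
have q2 : 0 < p * (1 + a) by apply: mulr_gt0; lra.
pose K := 1 / p + a / p + b / p + a / (p * (1 + a))
  + (p * (1 + b) + b) / (p * p * (1 - r2)) + (p * (a + b) + a * b) / (p * p * (1 - r2))
  + (p * a + b * p * (1 + a) + a * b) / (p * p * (1 + a) * (1 - r2)).
have k1 : 0 <= 1 / p by rewrite divr_ge0 // ltW.
have k2 : 0 <= a / p by rewrite divr_ge0 // ltW.
have k3 : 0 <= b / p by rewrite divr_ge0 // ltW.
have k4 : 0 <= a / (p * (1 + a)) by rewrite divr_ge0 // ltW.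
have k5 : 0 <= (p * (1 + b) + b) / (p * p * (1 - r2)) by rewrite divr_ge0 ?ltW //; nra.
have k6 : 0 <= (p * (a + b) + a * b) / (p * p * (1 - r2)) by rewrite divr_ge0 ?ltW //; nra.
have k7 : 0 <= (p * a + b * p * (1 + a) + a * b) / (p * p * (1 + a) * (1 - r2)) by rewrite divr_ge0 ?ltW //; nra.
have v0 : ln (1 - r2) / ln 2 <= 0.
  by rewrite pmulr_lle0 ?invr_gt0 // ln_le0 //; lra.
have key : forall s, 0 < s < 1 ->
  - (3 * ((K / ln 2) * s)) <= Lbound p rho s (a * s) (b * s) - target s <= 3 * ((K / ln 2) * s) /\
  - (3 * ((K / ln 2) * s)) <= Ubound p rho s (a * s) (b * s) - target s <= 3 * ((K / ln 2) * s).
  move=> s /andP[s0 s1].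
  have as0 : 0 < a * s by apply: mulr_gt0.
  have bs0 : 0 < b * s by apply: mulr_gt0.
  have abs0 : 0 < a * b * s by apply: mulr_gt0; [apply: mulr_gt0|].
  have ab0 : 0 < a * b by apply: mulr_gt0.
  have pa0 : 0 < p * a by apply: mulr_gt0.
  have pb0 : 0 < p * b by apply: mulr_gt0.
  have /andP[dA1 dA2] := @bnd R p s 1 s K hp (ltW s0) ltac:(by rewrite mul1r) ltac:(rewrite /K; lra) (ltW s0).
  have /andP[dB1 dB2] := @bnd R p (a * s) a s K hp ltac:(nra) (lexx _) ltac:(rewrite /K; lra) (ltW s0).
  have /andP[dE1 dE2] := @bnd R p (b * s) b s K hp ltac:(nra) (lexx _) ltac:(rewrite /K; lra) (ltW s0).
  have /andP[dAB1 dAB2] := @bnd R (p * (1 + a)) (a * s) a s K q2 ltac:(nra) (lexx _) ltac:(rewrite /K; lra) (ltW s0).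
  have /andP[dAE1 dAE2] := @bnd R (p * p * (1 - r2)) (p * (s + b * s) + s * (b * s)) (p * (1 + b) + b) s K q0
     ltac:(nra) ltac:(nra) ltac:(rewrite /K; lra) (ltW s0).
  have /andP[dBE1 dBE2] := @bnd R (p * p * (1 - r2)) (p * (a * s + b * s) + a * s * (b * s)) (p * (a + b) + a * b) s K q0
     ltac:(nra) ltac:(nra) ltac:(rewrite /K; lra) (ltW s0).
  have /andP[dABE1 dABE2] := @bnd R (p * p * (1 + a) * (1 - r2)) (s * (p * a + b * p * (1 + a) + a * b * s))
     (p * a + b * p * (1 + a) + a * b) s K q1
     ltac:(apply: mulr_ge0; nra) ltac:(nra) ltac:(rewrite /K; lra) (ltW s0).
  have F1 := @linA R _ _ _ _ _ l2 (@id1 R p a r2 (cst R) s hp ha r0 r1 cp s0).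
  have F2 := @linA R _ _ _ _ _ l2 (@id2 R p r2 (cst R) s (b * s) hp r0 r1 cp s0 (mulr_gt0 hb s0)).
  have F3 := @linA R _ _ _ _ _ l2 (@id2 R p r2 (cst R) (a * s) (b * s) hp r0 r1 cp (mulr_gt0 ha s0) (mulr_gt0 hb s0)).
  have F4 := @linB R _ _ _ _ _ l2 (@id4 R p a b r2 (cst R) s hp ha hb r0 r1 cp s0).
  rewrite /Lbound /Ubound /MI /CMI /= hA hB hE hAB hAE hBE hABE -/r2 /target -/r2.
  by apply: (@keyalg R _ _ _ _ _ _ _ _ _ _ _ _ _ _ F1 F2 F3 F4 v0); apply/andP; split.
have lam0 : 0 <= 3 * (K / ln 2).
  apply: mulr_ge0; first lra. apply: divr_ge0; last exact: ltW. rewrite /K; lra.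
split; last split.
- exists (3 * (K / ln 2)), 1; split; first lra.
  move=> s hs; have [/andP[h1 h2] _] := key s hs.
  by rewrite ler_norml -mulrA h2 andbT; lra.
- exists (3 * (K / ln 2)), 1; split; first lra.
  move=> s hs; have [_ /andP[h1 h2]] := key s hs.
  by rewrite ler_norml -mulrA h2 andbT; lra.
- move=> C hC; exists (3 * (K / ln 2)), 1; split; first lra.
  move=> s hs; have [/andP[h1 h2] /andP[h3 h4]] := key s hs.
  have /andP[h5 h6] := hC s (proj1 (andP hs)).
  rewrite ler_norml -mulrA; apply/andP; split; lra.
Qed.
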